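(* Let $p_1\equiv p_2\equiv1\pmod4$ be primes and let $\varepsilon_{p_1p_2}=a+b\sqrt{p_1p_2}$ be the fundamental unit of $\mathbb{Q}(\sqrt{p_1p_2})$. If $N(\varepsilon_{p_1p_2})=1$, then neither $a+1$ nor $a-1$ is a perfect square in $\mathbb{N}$.
   Context: $a,b$ are integers or half-integers; $N$ denotes the norm from $\mathbb{Q}(\sqrt{p_1p_2})$ to $\mathbb{Q}$. *)

(* Defs.v *)
From Stdlib Require Import Reals ZArith Znumtheory.
Open Scope R_scope.

(* For a squarefree d ≡ 1 (mod 4), the ring of integers of Q(sqrt d) is
   Z[(1+sqrt d)/2] = { a + b sqrt d | a, b both integers or both half-integers }.
   We represent a + b*sqrt d by the pair of reals (a, b). *)
Definition OK_elem (d : Z) (a b : R) : Prop :=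
  exists x y : Z, a = IZR x / 2 /\ b = IZR y / 2 /\ Z.even x = Z.even y.

Definition normQ (d : Z) (a b : R) : R := a ^ 2 - IZR d * b ^ 2.

Definition OK_unit (d : Z) (a b : R) : Prop :=
  OK_elem d a b /\ (normQ d a b = 1 \/ normQ d a b = -1).

Definition fundamental_unit (d : Z) (a b : R) : Prop :=
  OK_unit d a b /\ 1 < a + b * sqrt (IZR d) /\
  forall a' b' : R, OK_unit d a' b' -> 1 < a' + b' * sqrt (IZR d) ->
    a + b * sqrt (IZR d) <= a' + b' * sqrt (IZR d).

(* Main.v *)
Require Import Defs.
From Stdlib Require Import Reals ZArith Znumtheory Lia Lra.

Lemma sq_parity u s : Z.odd u = true -> (exists w, u*(s*s) = 2*w) -> exists s', s = 2*s'.
Proof.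
  intros Hu [w Hw].
  destruct (Z.Even_or_Odd s) as [[s' ->]|[s' ->]]; [eauto|].
  exfalso. rewrite Zodd_bool_iff in Hu. apply Zodd_ex_iff in Hu. destruct Hu as [u' ->]. nia.
Qed.

Lemma descent : forall (n : nat) u v s t, Z.abs s <= Z.of_nat n ->
  Z.odd u = true -> Z.odd v = true -> u*(s*s) = 2*v*(t*t) -> s = 0.
Proof.
  induction n; intros u v s t Hn Hu Hv E.
  - lia.
  - destruct (Z.eq_dec s 0) as [|Hs]; [assumption|].
    destruct (sq_parity u s Hu) as [s' ->]. { exists (v*(t*t)). lia. }
    destruct (sq_parity v t Hv) as [t' ->]. { exists (u*(s'*s')). nia. }
    assert (s' = 0) by (apply (IHn u v s' t'); auto; [lia|nia]). lia.
Qed.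

Lemma core d B N s : (exists q, d = 4*q+1) -> (s = 1 \/ s = -1) ->
  (N*N+s)*(N*N+s) - d*(B*B) = 1 -> B <> 0 -> False.
Proof.
  intros [q Hd] Hs E HB.
  destruct (Z.Even_or_Odd N) as [[k ->]|[k ->]].
  - apply HB. apply (descent (Z.abs_nat B) d (2*k*k+s) B (2*k)); [lia| | |].
    + subst d. replace (4*q+1) with (1+2*(2*q)) by ring. rewrite Z.odd_add_mul_2. reflexivity.
    + replace (2*k*k+s) with (s + 2*(k*k)) by ring. rewrite Z.odd_add_mul_2.
      destruct Hs as [->| ->]; reflexivity.
    + destruct Hs as [-> | ->]; nia.
  - destruct (Z.Even_or_Odd B) as [[c ->]|[c ->]]; subst d;
    destruct Hs as [-> | ->]; nia.
Qed.

Open Scope R_scope.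

Lemma real_part (d : Z) (a b : R) (N s : Z) :
  (exists q, d = 4*q+1)%Z -> (s = 1 \/ s = -1)%Z ->
  fundamental_unit d a b -> normQ d a b = 1 -> a = IZR (N*N+s) -> False.
Proof.
  intros Hd Hs [[[x [y [Ha [Hb Hxy]]]] _] [Hgt _]] Hn HaN.
  assert (Hx : x = (2*(N*N+s))%Z).
  { apply eq_IZR. rewrite mult_IZR, <- HaN, Ha. simpl. field. }
  assert (Hy : Z.even y = true).
  { rewrite <- Hxy, Hx. apply Z.even_mul. }
  apply Z.even_spec in Hy. destruct Hy as [B HB].
  assert (HbB : b = IZR B). { rewrite Hb, HB, mult_IZR. simpl. field. }
  apply (core d B N s Hd Hs).
  - apply eq_IZR. unfold normQ in Hn. rewrite HaN, HbB in Hn.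
    rewrite minus_IZR, !mult_IZR. simpl. rewrite <- Hn. ring.
  - intro HB0. subst B. rewrite HbB in Hgt, Hn. unfold normQ in Hn.
    simpl in Hgt, Hn. nra.
Qed.

Theorem lemma14 (p1 p2 : Z) (a b : R) :
  prime p1 -> prime p2 -> p1 <> p2 ->
  (p1 mod 4 = 1)%Z -> (p2 mod 4 = 1)%Z ->
  fundamental_unit (p1 * p2) a b ->
  normQ (p1 * p2) a b = 1 ->
  ~ (exists n : nat, a + 1 = INR n ^ 2) /\ ~ (exists n : nat, a - 1 = INR n ^ 2).
Proof.
  intros _ _ _ H1 H2 Hf Hn.
  assert (Hd : (exists q, p1 * p2 = 4*q+1)%Z).
  { pose proof (Z.div_mod p1 4 ltac:(lia)). pose proof (Z.div_mod p2 4 ltac:(lia)).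
    exists (4*(p1/4)*(p2/4) + p1/4 + p2/4)%Z. nia. }
  split; intros [n Hnn].
  - apply (real_part _ a b (Z.of_nat n) (-1) Hd (or_intror eq_refl) Hf Hn).
    rewrite plus_IZR, mult_IZR, <- INR_IZR_INZ. simpl. lra.
  - apply (real_part _ a b (Z.of_nat n) 1 Hd (or_introl eq_refl) Hf Hn).
    rewrite plus_IZR, mult_IZR, <- INR_IZR_INZ. simpl. lra.
Qed.
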